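(* (i) Let $I,J$ be sets and $R\colon I\times J\to[0,1]$ a fuzzy relation. Then the mappings $f_R\colon[0,1]^I\to[0,1]^J$ and $g_R\colon[0,1]^J\to[0,1]^I$ satisfy $f_R\leftrightarrows g_R$ (as maps between the power Pavelka algebras $[0,1]^I$ and $[0,1]^J$). (ii) Let $\mathbf A$ and $\mathbf B$ be semisimple Pavelka algebras and let $f\colon A\to B$, $g\colon B\to A$ satisfy $f\leftrightarrows g$. Then there exists a fuzzy relation $R\colon \mathrm{Spec_M}\mathbf A\times\mathrm{Spec_M}\mathbf B\to[0,1]$ (namely $R(F,G)=\bigwedge_{a\in A}(f(a)/G\rightarrow a/F)$) such that $n_{\mathbf B}(f(x))=f_R(n_{\mathbf A}(x))$ for all $x\in A$ and $n_{\mathbf A}(g(y))=g_R(n_{\mathbf B}(y))$ for all $y\in B$, where $f_R,g_R$ are taken with $I=\mathrm{Spec_M}\mathbf A$, $J=\mathrm{Spec_M}\mathbf B$.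
   Context: An MV-algebra $(A;\oplus,\neg,0)$ carries derived operations $1=\neg0$, $x\cdot y=\neg(\neg x\oplus\neg y)$, $x\rightarrow y=\neg x\oplus y$, $x\vee y=\neg(\neg x\oplus y)\oplus y$, $x\wedge y=\neg(\neg x\vee\neg y)$, and order $x\le y$ iff $\neg x\oplus y=1$. The standard MV-algebra is $[0,1]$ with $x\oplus y=\min\{x+y,1\}$, $\neg x=1-x$ (so $x\cdot y=\max\{0,x+y-1\}$, $x\rightarrow y=\min\{1,1-x+y\}$). A Pavelka algebra is $\mathbf A=(A;\oplus,\neg,\{\mathbf r\mid r\in[0,1]\cap\mathbb Q\})$ with $(A;\oplus,\neg,\mathbf 0)$ an MV-algebra, $\mathbf r\oplus\mathbf s=\mathbf t$ whenever $\min\{r+s,1\}=t$, and $\neg\mathbf r=\mathbf s$ whenever $1-r=s$. The standard Pavelka algebra is $[0,1]$ with $\mathbf r$ interpreted as $r$; $[0,1]^I$ is its power (componentwise, constants diagonal). A filter of a Pavelka algebra is a filter of its MV-reduct (a nonempty up-set closed under $\cdot$); a maximal filter is a maximal proper filter; $\mathrm{Spec_M}\mathbf A$ is the set of maximal filters. For $F\in\mathrm{Spec_M}\mathbf A$ the quotient $\mathbf A/F$ embeds uniquely into the standard Pavelka algebra and $x/F$ is identified with its image in $[0,1]$. $\mathbf A$ is semisimple if its MV-reduct is a subdirect product of simple MV-algebras. The natural embedding is $n_{\mathbf A}\colon A\to[0,1]^{\mathrm{Spec_M}\mathbf A}$, $n_{\mathbf A}(x)(F)=x/F$. For Pavelka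 algebras $\mathbf A,\mathbf B$ and maps $f\colon A\to B$, $g\colon B\to A$: $f\leftrightarrows g$ ($f$ is a strong left adjoint of $g$) means that $f,g$ are monotone, $x\le f(y)$ iff $g(x)\le y$ for all $y\in A$, $x\in B$, and $\mathbf r\rightarrow f(x)=f(\mathbf r\rightarrow x)$ for all $x\in A$ and all constants $\mathbf r$ (equivalently $\mathbf r\cdot g(y)=g(\mathbf r\cdot y)$ for all $y\in B$ and constants $\mathbf r$). For $R\colon I\times J\to[0,1]$: $f_R(x)(j)=\bigwedge_{i\in I}(R(i,j)\rightarrow x(i))$ for $x\in[0,1]^I$, $j\in J$; $g_R(y)(i)=\bigvee_{j\in J}(R(i,j)\cdot y(j))$ for $y\in[0,1]^J$, $i\in I$ (operations of the standard MV-algebra). *)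

(* Defs.v *)
From Stdlib Require Import Reals Lra QArith Qreals.
From Stdlib Require Import Classical ClassicalEpsilon FunctionalExtensionality ProofIrrelevance.
Open Scope R_scope.

Definition U01 := {r : R | 0 <= r <= 1}.

Lemma U01_eq (a b : U01) : proj1_sig a = proj1_sig b -> a = b.
Proof. destruct a, b; simpl; intros ->; f_equal; apply proof_irrelevance. Qed.

Definition Rimp (a b : R) : R := Rmin 1 (1 - a + b).
Definition Rtimes (a b : R) : R := Rmax 0 (a + b - 1).

(* infimum / supremum in the complete lattice [0,1] of (the part in [0,1] of) P;
   inf of the empty family is 1, sup of the empty family is 0 *)
Definition is_inf01 (P : R -> Prop) (r : R) : Prop :=
  0 <= r <= 1 /\ (forall z, P z -> 0 <= z <= 1 -> r <= z) /\
  (forall s, 0 <= s <= 1 -> (forall z, P z -> 0 <= z <= 1 -> s <= z) -> s <= r).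
Definition is_sup01 (P : R -> Prop) (r : R) : Prop :=
  0 <= r <= 1 /\ (forall z, P z -> 0 <= z <= 1 -> z <= r) /\
  (forall s, 0 <= s <= 1 -> (forall z, P z -> 0 <= z <= 1 -> z <= s) -> r <= s).

Definition inf01 (P : R -> Prop) : R := epsilon (inhabits 0) (is_inf01 P).
Definition sup01 (P : R -> Prop) : R := epsilon (inhabits 0) (is_sup01 P).

Lemma inf01_exists P : exists r, is_inf01 P r.
Proof.
  set (L := fun s => 0 <= s <= 1 /\ forall z, P z -> 0 <= z <= 1 -> s <= z).
  destruct (completeness L) as [r [Hub Hl]].
  - exists 1; intros s [Hs _]; lra.
  - exists 0; split; [lra|]; intros z _ Hz; lra.
  - exists r. assert (H0 : 0 <= r) by (apply Hub; split; [lra|]; intros z _ Hz; lra).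
    assert (H1 : r <= 1) by (apply Hl; intros s [Hs _]; lra).
    split; [lra|]; split.
    + intros z Pz Hz; apply Hl; intros s [_ Hs]; apply Hs; auto.
    + intros s Hs Hb; apply Hub; split; auto.
Qed.

Lemma sup01_exists P : exists r, is_sup01 P r.
Proof.
  set (S := fun z => (P z /\ 0 <= z <= 1) \/ z = 0).
  destruct (completeness S) as [r [Hub Hl]].
  - exists 1; intros z [[_ Hz]| ->]; lra.
  - exists 0; right; reflexivity.
  - exists r. assert (H0 : 0 <= r) by (apply Hub; right; reflexivity).
    assert (H1 : r <= 1) by (apply Hl; intros z [[_ Hz]| ->]; lra).
    split; [lra|]; split.
    + intros z Pz Hz; apply Hub; left; auto.
    + intros s Hs Hb; apply Hl; intros z [[Pz Hz]| ->]; [apply Hb; auto | lra].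
Qed.

Lemma inf01_spec P : is_inf01 P (inf01 P).
Proof. unfold inf01; apply epsilon_spec, inf01_exists. Qed.
Lemma sup01_spec P : is_sup01 P (sup01 P).
Proof. unfold sup01; apply epsilon_spec, sup01_exists. Qed.

Lemma inf01_range P : 0 <= inf01 P <= 1.
Proof. apply (proj1 (inf01_spec P)). Qed.
Lemma sup01_range P : 0 <= sup01 P <= 1.
Proof. apply (proj1 (sup01_spec P)). Qed.

Record MVAlgebra := {
  mv_car :> Type;
  mv_oplus : mv_car -> mv_car -> mv_car;
  mv_neg : mv_car -> mv_car;
  mv_zero : mv_car;
  mv_assoc : forall x y z, mv_oplus x (mv_oplus y z) = mv_oplus (mv_oplus x y) z;
  mv_comm : forall x y, mv_oplus x y = mv_oplus y x;
  mv_zero_r : forall x, mv_oplus x mv_zero = x;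
  mv_negneg : forall x, mv_neg (mv_neg x) = x;
  mv_one_abs : forall x, mv_oplus x (mv_neg mv_zero) = mv_neg mv_zero;
  mv_luk : forall x y, mv_oplus (mv_neg (mv_oplus (mv_neg x) y)) y
                     = mv_oplus (mv_neg (mv_oplus (mv_neg y) x)) x
}.

Arguments mv_oplus {_}. Arguments mv_neg {_}. Arguments mv_zero {_}.

Section Derived.
Context {A : MVAlgebra}.
Definition mv_one : A := mv_neg mv_zero.
Definition mv_times (x y : A) : A := mv_neg (mv_oplus (mv_neg x) (mv_neg y)).
Definition mv_imp (x y : A) : A := mv_oplus (mv_neg x) y.
Definition mv_join (x y : A) : A := mv_oplus (mv_neg (mv_oplus (mv_neg x) y)) y.
Definition mv_meet (x y : A) : A := mv_neg (mv_join (mv_neg x) (mv_neg y)).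
Definition mv_le (x y : A) : Prop := mv_oplus (mv_neg x) y = mv_one.

Definition is_filter (F : A -> Prop) : Prop :=
  (exists x, F x) /\ (forall x y, F x -> mv_le x y -> F y) /\
  (forall x y, F x -> F y -> F (mv_times x y)).
Definition is_proper_filter (F : A -> Prop) : Prop :=
  is_filter F /\ exists x, ~ F x.
Definition is_maximal_filter (F : A -> Prop) : Prop :=
  is_proper_filter F /\
  forall G, is_proper_filter G -> (forall x, F x -> G x) -> forall x, G x -> F x.
End Derived.

Definition mv_hom (A B : MVAlgebra) (h : A -> B) : Prop :=
  (forall x y, h (mv_oplus x y) = mv_oplus (h x) (h y)) /\
  (forall x, h (mv_neg x) = mv_neg (h x)) /\ h mv_zero = mv_zero.

Definition mv_simple (A : MVAlgebra) : Prop :=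
  (mv_zero : A) <> mv_one /\
  forall F : A -> Prop, is_filter F -> (forall x, F x -> x = mv_one) \/ (forall x, F x).

(* semisimple: subdirect product of simple MV-algebras, i.e. an injective
   homomorphism into a product of simple algebras whose projections are onto *)
Definition mv_semisimple (A : MVAlgebra) : Prop :=
  exists (K : Type) (B : K -> MVAlgebra) (e : A -> forall k, B k),
    (forall k, mv_simple (B k)) /\
    (forall k, mv_hom A (B k) (fun a => e a k)) /\
    (forall a b, e a = e b -> a = b) /\
    (forall k (y : B k), exists a, e a k = y).

Definition Q01 := {q : Q | (0 <= q <= 1)%Q}.
Definition q01val (q : Q01) : R := Q2R (proj1_sig q).

Record Pavelka := {
  pv_mv :> MVAlgebra;
  pv_cst : Q01 -> pv_mv;
  pv_cst_zero : forall q : Q01, q01val q = 0 -> pv_cst q = mv_zero;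
  pv_cst_add : forall r s t : Q01, Rmin (q01val r + q01val s) 1 = q01val t ->
                 mv_oplus (pv_cst r) (pv_cst s) = pv_cst t;
  pv_cst_neg : forall r s : Q01, 1 - q01val r = q01val s ->
                 mv_neg (pv_cst r) = pv_cst s
}.
Arguments pv_cst {_}.

Definition pv_semisimple (A : Pavelka) : Prop := mv_semisimple A.

Definition strong_adj (A B : Pavelka) (f : A -> B) (g : B -> A) : Prop :=
  (forall x y : A, mv_le x y -> mv_le (f x) (f y)) /\
  (forall x y : B, mv_le x y -> mv_le (g x) (g y)) /\
  (forall (y : A) (x : B), mv_le x (f y) <-> mv_le (g x) y) /\
  (forall (x : A) (r : Q01), mv_imp (pv_cst r) (f x) = f (mv_imp (pv_cst r) x)).

Lemma Rmin01 a b : 0 <= a <= 1 -> 0 <= b <= 1 -> 0 <= Rmin (a + b) 1 <= 1.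
Proof. intros; unfold Rmin; destruct (Rle_dec _ _); lra. Qed.
Lemma neg01 a : 0 <= a <= 1 -> 0 <= 1 - a <= 1.
Proof. lra. Qed.
Lemma zero01 : 0 <= 0 <= 1.
Proof. lra. Qed.

Definition u_oplus (a b : U01) : U01 :=
  exist _ _ (Rmin01 _ _ (proj2_sig a) (proj2_sig b)).
Definition u_neg (a : U01) : U01 := exist _ _ (neg01 _ (proj2_sig a)).
Definition u_zero : U01 := exist _ 0 zero01.

Lemma q01_range (q : Q01) : 0 <= q01val q <= 1.
Proof.
  destruct q as [q [H0 H1]]; unfold q01val; simpl.
  apply Qle_Rle in H0; apply Qle_Rle in H1.
  replace (Q2R 0) with 0 in H0 by (unfold Q2R; simpl; field).
  replace (Q2R 1) with 1 in H1 by (unfold Q2R; simpl; field).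
  split; lra.
Qed.
Definition u_cst (q : Q01) : U01 := exist _ _ (q01_range q).

Ltac mvsolve := unfold Rmin, Rmax; repeat destruct Rle_dec; lra.

Section Power.
Variable I : Type.
Definition p_oplus (x y : I -> U01) : I -> U01 := fun i => u_oplus (x i) (y i).
Definition p_neg (x : I -> U01) : I -> U01 := fun i => u_neg (x i).
Definition p_zero : I -> U01 := fun _ => u_zero.

Ltac pw := intros; apply functional_extensionality;
           let i := fresh "i" in intro i;
           unfold p_oplus, p_neg, p_zero; apply U01_eq; simpl;
           repeat match goal with x : I -> U01 |- _ =>
             let H := fresh in pose proof (proj2_sig (x i)) as H; simpl in H;
             revert H; generalize (proj1_sig (x i)); clear x end;
           intros; mvsolve.

Lemma p_assoc x y z : p_oplus x (p_oplus y z) = p_oplus (p_oplus x y) z. Proof. pw. Qed.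
Lemma p_comm x y : p_oplus x y = p_oplus y x. Proof. pw. Qed.
Lemma p_zero_r x : p_oplus x p_zero = x. Proof. pw. Qed.
Lemma p_negneg x : p_neg (p_neg x) = x. Proof. pw. Qed.
Lemma p_one_abs x : p_oplus x (p_neg p_zero) = p_neg p_zero. Proof. pw. Qed.
Lemma p_luk x y : p_oplus (p_neg (p_oplus (p_neg x) y)) y
                = p_oplus (p_neg (p_oplus (p_neg y) x)) x. Proof. pw. Qed.

Definition PowerMV : MVAlgebra :=
  {| mv_car := I -> U01; mv_oplus := p_oplus; mv_neg := p_neg; mv_zero := p_zero;
     mv_assoc := p_assoc; mv_comm := p_comm; mv_zero_r := p_zero_r;
     mv_negneg := p_negneg; mv_one_abs := p_one_abs; mv_luk := p_luk |}.

Definition p_cst (q : Q01) : PowerMV := fun _ => u_cst q.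

Lemma p_cst_zero (q : Q01) : q01val q = 0 -> p_cst q = mv_zero.
Proof. intros H; apply functional_extensionality; intro i; apply U01_eq; simpl; auto. Qed.
Lemma p_cst_add (r s t : Q01) : Rmin (q01val r + q01val s) 1 = q01val t ->
  mv_oplus (p_cst r) (p_cst s) = p_cst t.
Proof. intros H; apply functional_extensionality; intro i; apply U01_eq; simpl; auto. Qed.
Lemma p_cst_neg (r s : Q01) : 1 - q01val r = q01val s -> mv_neg (p_cst r) = p_cst s.
Proof. intros H; apply functional_extensionality; intro i; apply U01_eq; simpl; auto. Qed.

Definition PowerPav : Pavelka :=
  {| pv_mv := PowerMV; pv_cst := p_cst; pv_cst_zero := p_cst_zero;
     pv_cst_add := p_cst_add; pv_cst_neg := p_cst_neg |}.
End Power.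

Definition fR {I J : Type} (Rel : I -> J -> U01) (x : I -> R) : J -> R :=
  fun j => inf01 (fun z => exists i, z = Rimp (proj1_sig (Rel i j)) (x i)).
Definition gR {I J : Type} (Rel : I -> J -> U01) (y : J -> R) : I -> R :=
  fun i => sup01 (fun z => exists j, z = Rtimes (proj1_sig (Rel i j)) (y j)).

Definition fR01 {I J : Type} (Rel : I -> J -> U01) (x : PowerPav I) : PowerPav J :=
  fun j => exist _ (fR Rel (fun i => proj1_sig (x i)) j) (inf01_range _).
Definition gR01 {I J : Type} (Rel : I -> J -> U01) (y : PowerPav J) : PowerPav I :=
  fun i => exist _ (gR Rel (fun j => proj1_sig (y j)) i) (sup01_range _).

Definition SpecM (A : Pavelka) : Type := {F : A -> Prop | is_maximal_filter F}.

(* h : A -> [0,1] is (the composite of the quotient map A -> A/F with) an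
   embedding of the Pavelka algebra A/F into the standard Pavelka algebra [0,1]:
   a Pavelka homomorphism into [0,1] identifying exactly the F-congruent elements *)
Definition quotient_embedding (A : Pavelka) (F : A -> Prop) (h : A -> R) : Prop :=
  (forall a, 0 <= h a <= 1) /\
  (forall a b, h (mv_oplus a b) = Rmin (h a + h b) 1) /\
  (forall a, h (mv_neg a) = 1 - h a) /\
  (forall q : Q01, h (pv_cst q) = q01val q) /\
  (forall a b, h a = h b <-> F (mv_times (mv_imp a b) (mv_imp b a))).

(* x/F, identified with its image in [0,1] *)
Definition qval {A : Pavelka} (F : SpecM A) (x : A) : R :=
  epsilon (inhabits 0)
    (fun r => exists h, quotient_embedding A (proj1_sig F) h /\ h x = r).

Definition nmap (A : Pavelka) (x : A) : SpecM A -> R := fun F => qval F x.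

(* Main.v *)
Require Import Defs.
From Stdlib Require Import Reals Lra Lia QArith Qreals.
From Stdlib Require Import Classical ClassicalEpsilon FunctionalExtensionality ProofIrrelevance.
From mathcomp Require classical_sets.
Set Bullet Behavior "Strict Subproofs".
Open Scope R_scope.

Section MV.
Context {A : MVAlgebra}.
Local Notation "x ⊕ y" := (@mv_oplus A x y) (at level 50, left associativity).
Local Notation "¬ x" := (@mv_neg A x) (at level 35, right associativity).
Local Notation "x ⊙ y" := (@mv_times A x y) (at level 40, left associativity).
Local Notation "x ⇒ y" := (@mv_imp A x y) (at level 55, right associativity).
Local Notation "x ≤ y" := (@mv_le A x y) (at level 70).
Local Notation "0" := (@mv_zero A).
Local Notation "1" := (@mv_one A).
Implicit Types x y z a b c d u v w : A.

Lemma oA x y z : x ⊕ (y ⊕ z) = x ⊕ y ⊕ z. Proof. apply mv_assoc. Qed.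
Lemma oC x y : x ⊕ y = y ⊕ x. Proof. apply mv_comm. Qed.
Lemma o0 x : x ⊕ 0 = x. Proof. apply mv_zero_r. Qed.
Lemma o0l x : 0 ⊕ x = x. Proof. rewrite oC; apply o0. Qed.
Lemma nn x : ¬ ¬ x = x. Proof. apply mv_negneg. Qed.
Lemma o1 x : x ⊕ 1 = 1. Proof. apply mv_one_abs. Qed.
Lemma o1l x : 1 ⊕ x = 1. Proof. rewrite oC; apply o1. Qed.
Lemma n1 : ¬ 1 = 0. Proof. unfold mv_one; apply nn. Qed.
Lemma n0 : ¬ 0 = 1. Proof. reflexivity. Qed.
Lemma luk x y : ¬(¬x ⊕ y) ⊕ y = ¬(¬y ⊕ x) ⊕ x. Proof. apply mv_luk. Qed.
Lemma neg_inj x y : ¬x = ¬y -> x = y.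
Proof. intros H; rewrite <- (nn x), <- (nn y), H; reflexivity. Qed.

Lemma onl x : ¬x ⊕ x = 1.
Proof. pose proof (luk x 1) as H. rewrite o1, n1, o0l in H. symmetry; exact H. Qed.
Lemma on x : x ⊕ ¬x = 1. Proof. rewrite oC; apply onl. Qed.

Lemma le_def x y : x ≤ y <-> ¬x ⊕ y = 1. Proof. reflexivity. Qed.
Lemma le_refl x : x ≤ x. Proof. apply onl. Qed.
Lemma le_or x z : x ≤ x ⊕ z. Proof. unfold mv_le; rewrite oA, onl; apply o1l. Qed.
Lemma le_ol x z : x ≤ z ⊕ x. Proof. rewrite oC; apply le_or. Qed.
Lemma le_ex x y : x ≤ y -> y = ¬(¬y ⊕ x) ⊕ x.
Proof. unfold mv_le; intros H. rewrite <- luk, H, n1, o0l; reflexivity. Qed.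
Lemma le_trans x y z : x ≤ y -> y ≤ z -> x ≤ z.
Proof.
  intros H1 H2. apply le_ex in H1; apply le_ex in H2.
  set (w1 := ¬(¬y ⊕ x)) in H1. set (w2 := ¬(¬z ⊕ y)) in H2.
  rewrite H2, H1. unfold mv_le. rewrite (oC w2), (oC w1), !oA, onl, !o1l; reflexivity.
Qed.
Lemma le_antisym x y : x ≤ y -> y ≤ x -> x = y.
Proof. intros H1 H2. apply le_ex in H1. rewrite H1. unfold mv_le in H2. rewrite H2, n1, o0l; reflexivity. Qed.
Lemma le_one x : x ≤ 1. Proof. unfold mv_le; apply o1. Qed.
Lemma le_zero x : 0 ≤ x. Proof. unfold mv_le; rewrite n0; apply o1l. Qed.
Lemma o_mono x y z : x ≤ y -> x ⊕ z ≤ y ⊕ z.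
Proof. intros H; apply le_ex in H; set (w := ¬(¬y ⊕ x)) in H; rewrite H. rewrite <- oA. apply le_ol. Qed.
Lemma o_mono2 x y x' y' : x ≤ x' -> y ≤ y' -> x ⊕ y ≤ x' ⊕ y'.
Proof. intros H1 H2; apply le_trans with (x' ⊕ y). apply o_mono; auto. rewrite (oC x'), (oC x'); apply o_mono; auto. Qed.
Lemma n_anti x y : x ≤ y -> ¬y ≤ ¬x.
Proof. unfold mv_le; intros H; rewrite nn, oC; exact H. Qed.
Lemma n_anti_iff x y : ¬y ≤ ¬x <-> x ≤ y.
Proof. split; [intros H; apply n_anti in H; rewrite !nn in H; exact H| apply n_anti]. Qed.

Lemma tdef x y : x ⊙ y = ¬(¬x ⊕ ¬y). Proof. reflexivity. Qed.
Lemma tC x y : x ⊙ y = y ⊙ x. Proof. unfold mv_times; rewrite oC; reflexivity. Qed.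
Lemma tA x y z : x ⊙ (y ⊙ z) = x ⊙ y ⊙ z.
Proof. unfold mv_times; rewrite !nn, oA; reflexivity. Qed.
Lemma t1 x : x ⊙ 1 = x. Proof. unfold mv_times; rewrite n1, o0, nn; reflexivity. Qed.
Lemma t1l x : 1 ⊙ x = x. Proof. rewrite tC; apply t1. Qed.
Lemma t0 x : x ⊙ 0 = 0. Proof. unfold mv_times; rewrite n0, o1; apply n1. Qed.
Lemma n_o x y : ¬(x ⊕ y) = ¬x ⊙ ¬y. Proof. unfold mv_times; rewrite !nn; reflexivity. Qed.
Lemma n_t x y : ¬(x ⊙ y) = ¬x ⊕ ¬y. Proof. unfold mv_times; rewrite nn; reflexivity. Qed.
Lemma t_mono x y z : x ≤ y -> x ⊙ z ≤ y ⊙ z.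
Proof. intros H. unfold mv_times. apply n_anti. apply o_mono. apply n_anti; exact H. Qed.
Lemma t_mono2 x y x' y' : x ≤ x' -> y ≤ y' -> x ⊙ y ≤ x' ⊙ y'.
Proof. intros H1 H2; apply le_trans with (x' ⊙ y). apply t_mono; auto. rewrite (tC x'), (tC x'); apply t_mono; auto. Qed.
Lemma resid x y z : x ⊙ y ≤ z <-> x ≤ (y ⇒ z).
Proof. unfold mv_le, mv_times, mv_imp. rewrite nn, oA. reflexivity. Qed.
Lemma resid1 x y z : x ≤ (y ⇒ z) -> x ⊙ y ≤ z. Proof. apply resid. Qed.
Lemma resid2 x y z : x ⊙ y ≤ z -> x ≤ (y ⇒ z). Proof. apply resid. Qed.
Lemma t_le_l x y : x ⊙ y ≤ x.
Proof. apply resid. unfold mv_imp. rewrite oC. apply le_or. Qed.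
Lemma t_le_r x y : x ⊙ y ≤ y. Proof. rewrite tC; apply t_le_l. Qed.
Lemma mp x y : (x ⇒ y) ⊙ x ≤ y. Proof. apply resid, le_refl. Qed.
Lemma mp' x y : x ⊙ (x ⇒ y) ≤ y. Proof. rewrite tC; apply mp. Qed.
Lemma imp_one x y : x ≤ y <-> (x ⇒ y) = 1. Proof. reflexivity. Qed.
Lemma imp_1l x : (1 ⇒ x) = x. Proof. unfold mv_imp; rewrite n1; apply o0l. Qed.
Lemma imp_1r x : (x ⇒ 1) = 1. Proof. unfold mv_imp; apply o1. Qed.
Lemma imp_0l x : (0 ⇒ x) = 1. Proof. unfold mv_imp; rewrite n0; apply o1l. Qed.
Lemma imp_0r x : (x ⇒ 0) = ¬x. Proof. unfold mv_imp; apply o0. Qed.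
Lemma imp_mono x y x' y' : x' ≤ x -> y ≤ y' -> (x ⇒ y) ≤ (x' ⇒ y').
Proof. intros; unfold mv_imp; apply o_mono2; auto; apply n_anti; auto. Qed.
Lemma le_imp x y : y ≤ (x ⇒ y). Proof. unfold mv_imp; apply le_ol. Qed.
Lemma one_le x : 1 ≤ x -> x = 1. Proof. intros H; apply le_antisym; auto; apply le_one. Qed.
Lemma zero_ge x : x ≤ 0 -> x = 0. Proof. intros H; apply le_antisym; auto; apply le_zero. Qed.

Lemma jdef x y : mv_join x y = ¬(¬x ⊕ y) ⊕ y. Proof. reflexivity. Qed.
Lemma jC x y : mv_join x y = mv_join y x. Proof. apply luk. Qed.
Lemma le_jr x y : y ≤ mv_join x y. Proof. unfold mv_join; apply le_ol. Qed.
Lemma le_jl x y : x ≤ mv_join x y. Proof. rewrite jC; apply le_jr. Qed.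
Lemma j_alt x y : mv_join x y = (y ⊙ ¬x) ⊕ x.
Proof. rewrite jC; unfold mv_join, mv_times; rewrite nn; reflexivity. Qed.
Lemma j_lub x y z : x ≤ z -> y ≤ z -> mv_join x y ≤ z.
Proof.
  intros H1 H2. rewrite j_alt. pose proof (le_ex _ _ H1) as E.
  assert (E' : z = (z ⊙ ¬x) ⊕ x) by (rewrite E at 1; unfold mv_times; rewrite nn; reflexivity).
  rewrite E'. apply o_mono. apply t_mono; auto.
Qed.
Lemma m_lb_l x y : mv_meet x y ≤ x.
Proof. unfold mv_meet. apply n_anti_iff. rewrite nn. apply le_jl. Qed.
Lemma m_lb_r x y : mv_meet x y ≤ y.
Proof. unfold mv_meet. apply n_anti_iff. rewrite nn. apply le_jr. Qed.
Lemma m_glb x y z : z ≤ x -> z ≤ y -> z ≤ mv_meet x y.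
Proof. intros; unfold mv_meet. apply n_anti_iff; rewrite nn. apply j_lub; apply n_anti; auto. Qed.
Lemma meet_alt x y : mv_meet x y = x ⊙ (x ⇒ y).
Proof.
  unfold mv_meet. rewrite jC. unfold mv_join, mv_times, mv_imp. rewrite !nn. rewrite (oC y (¬x)), oC. reflexivity.
Qed.
Lemma ot_meet x y : (x ⊕ y) ⊙ ¬y = mv_meet x (¬y).
Proof. unfold mv_meet, mv_join, mv_times. rewrite !nn. reflexivity. Qed.

Lemma nmeet y z : ¬(mv_meet y z) = mv_join (¬y) (¬z).
Proof. unfold mv_meet; apply nn. Qed.
Lemma t_j_le x y z : x ⊙ (mv_join y z) ≤ mv_join (x ⊙ y) (x ⊙ z).
Proof.
  rewrite tC. apply resid. apply j_lub; apply resid; rewrite tC; [apply le_jl|apply le_jr].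
Qed.
Lemma o_m_ge x y z : mv_meet (x ⊕ y) (x ⊕ z) ≤ x ⊕ mv_meet y z.
Proof.
  apply n_anti_iff. rewrite n_o, nmeet.
  apply le_trans with (mv_join (¬x ⊙ ¬y) (¬x ⊙ ¬z)). apply t_j_le.
  rewrite nmeet, !n_o. apply le_refl.
Qed.
Lemma o_meet x y z : x ⊕ mv_meet y z = mv_meet (x ⊕ y) (x ⊕ z).
Proof.
  apply le_antisym. apply m_glb; rewrite !(oC x); apply o_mono; [apply m_lb_l|apply m_lb_r].
  apply o_m_ge.
Qed.
Lemma meet_one x : mv_meet x 1 = x.
Proof. apply le_antisym. apply m_lb_l. apply m_glb. apply le_refl. apply le_one. Qed.
Lemma E1 a b : a ⊕ b = a ⊕ mv_meet b (¬a).
Proof. rewrite o_meet, on, meet_one; reflexivity. Qed.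
Lemma E2 a b : b = mv_meet b (¬a) ⊕ (a ⊙ b).
Proof.
  rewrite meet_alt. unfold mv_imp.
  assert (H : a ⊙ b ≤ b) by apply t_le_r.
  apply le_ex in H. transitivity (¬(¬b ⊕ (a⊙b)) ⊕ (a⊙b)); [exact H|].
  f_equal. unfold mv_times; rewrite (oC (¬a)); reflexivity.
Qed.
Lemma E3 a b : a ⊕ b ⊕ (a ⊙ b) = a ⊕ b.
Proof. rewrite (E1 a b) at 1. rewrite <- oA, <- E2. reflexivity. Qed.
Lemma prelin x y : mv_join (x ⇒ y) (y ⇒ x) = 1.
Proof.
  assert (H : ¬(¬x ⊕ y) ⊕ (¬y ⊕ x) = ¬y ⊕ x).
  { replace (¬(¬x ⊕ y)) with (x ⊙ ¬y) by (unfold mv_times; rewrite nn; reflexivity).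
    rewrite oC, (oC (¬y) x). apply E3. }
  unfold mv_join, mv_imp. rewrite H. apply onl.
Qed.

Lemma j_one x : mv_join x 1 = 1. Proof. apply one_le, le_jr. Qed.
Lemma j_le_o x y : mv_join x y ≤ x ⊕ y. Proof. apply j_lub; [apply le_or|apply le_ol]. Qed.
Lemma le_j_mono x y x' y' : x ≤ x' -> y ≤ y' -> mv_join x y ≤ mv_join x' y'.
Proof. intros; apply j_lub; [apply le_trans with x'|apply le_trans with y']; auto; [apply le_jl|apply le_jr]. Qed.
Lemma j_t_one u v w : mv_join u v = 1 -> mv_join w v = 1 -> mv_join (u ⊙ w) v = 1.
Proof.
  intros H1 H2. apply one_le.
  assert (H : mv_join u v ⊙ mv_join w v ≤ mv_join (u ⊙ w) v).
  { apply resid. apply j_lub; apply resid.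
    - rewrite tC. apply resid. apply j_lub; apply resid.
      + rewrite tC. apply le_jl.
      + apply le_trans with v. apply t_le_l. apply le_jr.
    - apply le_trans with v. apply t_le_l. apply le_jr. }
  rewrite H1, H2, t1 in H. exact H.
Qed.

Fixpoint pw x (n : nat) : A := match n with O => 1 | S n => x ⊙ pw x n end.
Lemma pw_add x n m : pw x (n + m) = pw x n ⊙ pw x m.
Proof. induction n; simpl. rewrite t1l; reflexivity. rewrite IHn, tA; reflexivity. Qed.
Lemma pw_mono x y n : x ≤ y -> pw x n ≤ pw y n.
Proof. intros H; induction n; simpl. apply le_refl. apply t_mono2; auto. Qed.
Lemma pw_S_le x n : pw x (S n) ≤ pw x n. Proof. simpl. apply t_le_r. Qed.
Lemma pw_one n : pw 1 n = 1. Proof. induction n; simpl; auto. rewrite IHn; apply t1. Qed.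
Lemma pw_j_one u v n : mv_join u v = 1 -> mv_join (pw u n) v = 1.
Proof. intros H; induction n; simpl. rewrite jC; apply j_one. apply j_t_one; auto. Qed.
Lemma pw_o_one u v n m : mv_join u v = 1 -> pw u n ⊕ pw v m = 1.
Proof.
  intros H. apply pw_j_one with (n:=n) in H. rewrite jC in H. apply pw_j_one with (n:=m) in H.
  apply one_le. rewrite <- H, jC. apply j_le_o.
Qed.

Lemma t_o_le x y z : x ⊙ (y ⊕ z) ≤ (x ⊙ y) ⊕ z.
Proof.
  assert (G : forall w u, w ⊙ ¬z ≤ u -> w ≤ u ⊕ z).
  { intros w u Hw. apply resid in Hw. unfold mv_imp in Hw. rewrite nn, oC in Hw. exact Hw. }
  apply G. rewrite <- tA. apply t_mono2. apply le_refl. rewrite ot_meet. apply m_lb_l.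
Qed.
Lemma imp_o_le a b c d : (a ⇒ b) ⊙ (c ⇒ d) ≤ (a ⊕ c) ⇒ (b ⊕ d).
Proof.
  apply resid2.
  apply le_trans with ((a ⇒ b) ⊙ (((c ⇒ d) ⊙ c) ⊕ a)).
  { rewrite <- tA. apply t_mono2. apply le_refl. rewrite (oC a c). apply t_o_le. }
  apply le_trans with ((a ⇒ b) ⊙ (d ⊕ a)).
  { apply t_mono2. apply le_refl. apply o_mono. apply mp. }
  apply le_trans with (((a ⇒ b) ⊙ a) ⊕ d).
  { rewrite (oC d a). apply t_o_le. }
  rewrite (oC b d). rewrite (oC _ d). apply le_trans with (d ⊕ b).
  rewrite (oC d ((a ⇒ b) ⊙ a)), (oC d b). apply o_mono. apply mp. apply le_refl.
Qed.
Lemma imp_neg a b : (a ⇒ ¬b) = (b ⇒ ¬a). Proof. unfold mv_imp; apply oC. Qed.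
Lemma o_imp c d : c ⊕ d = (¬c ⇒ d). Proof. unfold mv_imp; rewrite nn; reflexivity. Qed.
Lemma imp_t a b c : (a ⊙ b ⇒ c) = (a ⇒ b ⇒ c). Proof. unfold mv_imp, mv_times; rewrite nn, oA; reflexivity. Qed.
Lemma le_imp_iff a b : a ≤ b <-> (a ⇒ b) = 1. Proof. reflexivity. Qed.

Lemma f_one F : is_filter F -> F 1.
Proof. intros [[x Hx] [Hu _]]. apply Hu with x; auto. apply le_one. Qed.
Lemma f_up F x y : is_filter F -> F x -> x ≤ y -> F y.
Proof. intros [_ [Hu _]]; eauto. Qed.
Lemma f_mul F x y : is_filter F -> F x -> F y -> F (x ⊙ y).
Proof. intros [_ [_ Hm]]; eauto. Qed.
Lemma f_mp F x y : is_filter F -> F x -> F (x ⇒ y) -> F y.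
Proof. intros HF H1 H2. apply f_up with (x ⊙ (x ⇒ y)); auto. apply f_mul; auto. apply mp'. Qed.
Lemma f_pw F x n : is_filter F -> F x -> F (pw x n).
Proof. intros HF H; induction n; simpl. apply f_one; auto. apply f_mul; auto. Qed.
Lemma proper_0 F : is_proper_filter F -> ~ F 0.
Proof. intros [HF [x Hx]] H0. apply Hx, f_up with 0; auto. apply le_zero. Qed.
Lemma proper_of F : is_filter F -> ~ F 0 -> is_proper_filter F.
Proof. intros; split; auto. exists 0; auto. Qed.

Lemma max_L1 F z : is_maximal_filter F -> ~ F z -> exists n, F (¬ pw z n).
Proof.
  intros [[HF Hp] Hmax] Hz.
  set (G := fun w => exists f n, F f /\ f ⊙ pw z n ≤ w).
  assert (HG : is_filter G).
  { split; [|split].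
    - exists 1, 1, O. split. apply f_one; auto. simpl; apply le_one.
    - intros x y [f [n [Hf Hx]]] Hxy. exists f, n; split; auto. eapply le_trans; eauto.
    - intros x y [f [n [Hf Hx]]] [f' [n' [Hf' Hy]]]. exists (f ⊙ f'), (n + n')%nat. split.
      apply f_mul; auto. rewrite pw_add.
      apply le_trans with ((f ⊙ pw z n) ⊙ (f' ⊙ pw z n')). 
      + rewrite !tA. apply t_mono. rewrite <- !tA. apply t_mono2. apply le_refl. rewrite tC. apply le_refl.
      + apply t_mono2; auto. }
  destruct (classic (G 0)) as [H0 | H0].
  - destruct H0 as [f [n [Hf Hle]]]. exists n. apply f_up with f; auto.
    apply resid in Hle. rewrite imp_0r in Hle. exact Hle.
  - exfalso. apply Hz. apply (Hmax G). apply proper_of; auto.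
    intros x Hx. exists x, O. split; auto. simpl. rewrite t1. apply le_refl.
    exists 1, (S O). split. apply f_one; auto. simpl. rewrite t1l, t1. apply le_refl.
Qed.

Lemma max_prime F a b : is_maximal_filter F -> F (a ⇒ b) \/ F (b ⇒ a).
Proof.
  intros HM. destruct (classic (F (a ⇒ b))) as [H|H]; auto.
  destruct (classic (F (b ⇒ a))) as [H'|H']; auto. exfalso.
  destruct (max_L1 F _ HM H) as [n Hn]. destruct (max_L1 F _ HM H') as [m Hm].
  destruct HM as [[HF Hp] _]. apply (proper_0 F (conj HF Hp)).
  pose proof (f_mul F _ _ HF Hn Hm) as Hx. rewrite <- n_o in Hx.
  rewrite (pw_o_one _ _ n m (prelin a b)), n1 in Hx. exact Hx.
Qed.
End MV.

Lemma zorn_filter (A : MVAlgebra) (P : A -> Prop) :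
  is_proper_filter P -> exists F, is_maximal_filter F /\ forall x, P x -> F x.
Proof.
  intros HP.
  set (PP := fun X : A -> Prop => (forall x, ~ X x) \/ (is_proper_filter X /\ forall x, P x -> X x)).
  destruct (@classical_sets.Zorn_bigcup A PP) as [M [HM Hmax]].
  - intros Ch HCh Htot.
    set (U := classical_sets.bigcup Ch (fun X => X)).
    destruct (classic (exists X x, Ch X /\ X x)) as [[X0 [x0 [HX0 Hx0]]] | Hno].
    + assert (Hf : forall X x, Ch X -> X x -> is_proper_filter X /\ forall x, P x -> X x).
      { intros X x HX Hx. destruct (HCh X HX) as [He|Hf]; auto. exfalso; apply (He x Hx). }
      right. split; [split; [split; [|split]|]|].
      * exists x0. exists X0; auto.
      * intros x y [X HX Hx] Hxy. exists X; auto. destruct (Hf X x HX Hx) as [[HF _] _]. eapply f_up; eauto.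
      * intros x y [X HX Hx] [Y HY Hy]. destruct (Hf X x HX Hx) as [[HFX _] _]. destruct (Hf Y y HY Hy) as [[HFY _] _].
        destruct (Htot X Y HX HY) as [HXY|HYX].
        -- exists Y; auto. apply f_mul; auto.
        -- exists X; auto. apply f_mul; auto.
      * exists mv_zero. intros [X HX H0]. destruct (Hf X _ HX H0) as [Hp _]. apply (proper_0 X Hp H0).
      * intros x Hx. exists X0; auto. destruct (Hf X0 x0 HX0 Hx0) as [_ HPX]. auto.
    + left. intros x [X HX Hx]. apply Hno. exists X, x; auto.
  - assert (HMp : is_proper_filter M /\ forall x, P x -> M x).
    { destruct HM as [He|Hf]; auto. exfalso. apply (Hmax P).
      split. intros x Hx; exfalso; apply (He x Hx).
      intros Hsub. destruct HP as [[[x Hx] _] _]. apply (He x), Hsub, Hx.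
      right; split; auto. }
    exists M. destruct HMp as [HMp HPM]. split; auto. split; auto.
    intros G HG HMG x Gx. apply NNPP; intros Hn. apply (Hmax G).
    split. exact HMG. intros Hs. apply Hn, Hs, Gx.
    right; split; auto.
Qed.

Lemma inf01_le P z : P z -> 0 <= z <= 1 -> inf01 P <= z.
Proof. intros; destruct (inf01_spec P) as [_ [HH _]]; auto. Qed.
Lemma inf01_ge P s : 0 <= s <= 1 -> (forall z, P z -> 0 <= z <= 1 -> s <= z) -> s <= inf01 P.
Proof. intros; destruct (inf01_spec P) as [_ [_ HH]]; auto. Qed.
Lemma sup01_ge P z : P z -> 0 <= z <= 1 -> z <= sup01 P.
Proof. intros; destruct (sup01_spec P) as [_ [HH _]]; auto. Qed.
Lemma sup01_le P s : 0 <= s <= 1 -> (forall z, P z -> 0 <= z <= 1 -> z <= s) -> sup01 P <= s.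
Proof. intros; destruct (sup01_spec P) as [_ [_ HH]]; auto. Qed.
Lemma inf01_unique P v : is_inf01 P v -> inf01 P = v.
Proof.
  intros [Hr [Hl Hg]]. pose proof (inf01_range P). apply Rle_antisym.
  - apply Hg. auto. intros; apply inf01_le; auto.
  - apply inf01_ge; auto.
Qed.
Lemma sup01_unique P v : is_sup01 P v -> sup01 P = v.
Proof.
  intros [Hr [Hl Hg]]. pose proof (sup01_range P). apply Rle_antisym.
  - apply sup01_le; auto.
  - apply Hg. auto. intros; apply sup01_ge; auto.
Qed.

Definition isQ (r : R) := exists q : Q, Q2R q = r.
Lemma isQ_plus r s : isQ r -> isQ s -> isQ (r + s).
Proof. intros [q Hq] [p Hp]; exists (q + p)%Q; rewrite Q2R_plus; subst; auto. Qed.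
Lemma isQ_minus r s : isQ r -> isQ s -> isQ (r - s).
Proof. intros [q Hq] [p Hp]; exists (q - p)%Q; rewrite Q2R_minus; subst; auto. Qed.
Lemma isQ_mult r s : isQ r -> isQ s -> isQ (r * s).
Proof. intros [q Hq] [p Hp]; exists (q * p)%Q; rewrite Q2R_mult; subst; auto. Qed.
Lemma isQ_IZR z : isQ (IZR z).
Proof. exists (inject_Z z). unfold Q2R; simpl. field. Qed.
Lemma isQ_0 : isQ 0. Proof. apply (isQ_IZR 0). Qed.
Lemma isQ_1 : isQ 1. Proof. apply (isQ_IZR 1). Qed.
Lemma isQ_INR n : isQ (INR n). Proof. rewrite INR_IZR_INZ; apply isQ_IZR. Qed.
Lemma isQ_inv r : isQ r -> r <> 0 -> isQ (/ r).
Proof.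
  intros [q Hq] Hr. exists (/ q)%Q. rewrite Q2R_inv; subst; auto.
  intros Hq0. apply Hr. rewrite (Qeq_eqR _ _ Hq0). unfold Q2R; simpl; field.
Qed.
Lemma isQ_max r s : isQ r -> isQ s -> isQ (Rmax r s).
Proof. intros; unfold Rmax; destruct Rle_dec; auto. Qed.
Lemma isQ_min r s : isQ r -> isQ s -> isQ (Rmin r s).
Proof. intros; unfold Rmin; destruct Rle_dec; auto. Qed.
Lemma isQ_q01 (c : Q01) : isQ (q01val c). Proof. exists (proj1_sig c); reflexivity. Qed.

Lemma Q_dense a b : a < b -> exists r, isQ r /\ a < r < b.
Proof.
  intros Hab.
  destruct (archimed (/ (b - a))) as [Hn1 _].
  set (n := up (/ (b - a))) in *.
  assert (Hpos : 0 < / (b - a)) by (apply Rinv_0_lt_compat; lra).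
  assert (Hn : 0 < IZR n) by lra.
  destruct (archimed (a * IZR n)) as [Hk1 Hk2].
  set (k := up (a * IZR n)) in *.
  exists (IZR k / IZR n). split.
  - unfold Rdiv; apply isQ_mult. apply isQ_IZR. apply isQ_inv. apply isQ_IZR. lra.
  - split.
    + apply Rmult_lt_reg_r with (IZR n); auto. unfold Rdiv. rewrite Rmult_assoc, Rinv_l, Rmult_1_r; lra.
    + apply Rmult_lt_reg_r with (IZR n); auto. unfold Rdiv. rewrite Rmult_assoc, Rinv_l, Rmult_1_r by lra.
      assert (H1 : 1 < (b - a) * IZR n).
      { apply Rmult_lt_reg_l with (/ (b - a)); auto. rewrite <- Rmult_assoc, Rinv_l, Rmult_1_l, Rmult_1_r by lra. lra. }
      nra.
Qed.
Lemma Q_dense01 a b : a < b -> a < 1 -> 0 < b -> exists r, isQ r /\ 0 <= r <= 1 /\ a < r < b.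
Proof.
  intros H1 H2 H3. destruct (Q_dense (Rmax a 0) (Rmin b 1)) as [r [Hr Hr2]].
  unfold Rmax, Rmin; repeat destruct Rle_dec; lra.
  exists r; repeat split; auto; revert Hr2; unfold Rmax, Rmin; repeat destruct Rle_dec; lra.
Qed.

Lemma ex_q01 r : isQ r -> 0 <= r <= 1 -> exists c : Q01, q01val c = r.
Proof.
  intros [q Hq] H. assert (H0 : (0 <= q <= 1)%Q).
  { split; apply Rle_Qle; subst; [replace (Q2R 0) with 0 by (unfold Q2R; simpl; field)| replace (Q2R 1) with 1 by (unfold Q2R; simpl; field)]; lra. }
  exists (exist _ q H0). exact Hq.
Qed.
Definition q01_zero : Q01.
Proof. exists 0%Q. split; unfold Qle; simpl; lia. Defined.
Lemma q01_zero_val : q01val q01_zero = 0.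
Proof. unfold q01val, Q2R; simpl; field. Qed.

Ltac rm := unfold Rmin, Rmax in *; repeat destruct Rle_dec; try lra.

Notation "x ⊕ y" := (mv_oplus x y) (at level 50, left associativity).
Notation "¬ x" := (mv_neg x) (at level 35, right associativity).
Notation "x ⊙ y" := (mv_times x y) (at level 40, left associativity).
Notation "x ⇒ y" := (mv_imp x y) (at level 55, right associativity).
Notation "x ≤ y" := (mv_le x y) (at level 70).
Arguments pw {A}.

Section Hom.
Variable A : MVAlgebra.
Variable h : A -> R.
Hypothesis Hr : forall a, 0 <= h a <= 1.
Hypothesis Ho : forall a b, h (a ⊕ b) = Rmin (h a + h b) 1.
Hypothesis Hn : forall a, h (¬ a) = 1 - h a.

Lemma h0 : h mv_zero = 0.
Proof.
  pose proof (Ho mv_zero (¬ mv_zero)) as H. rewrite o0l, Hn in H.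
  pose proof (Hr mv_zero). revert H; rm.
Qed.
Lemma h1 : h mv_one = 1. Proof. unfold mv_one; rewrite Hn, h0; lra. Qed.
Lemma ht a b : h (a ⊙ b) = Rmax 0 (h a + h b - 1).
Proof. unfold mv_times. rewrite Hn, Ho, !Hn. pose proof (Hr a); pose proof (Hr b). rm. Qed.
Lemma hi a b : h (a ⇒ b) = Rmin (1 - h a + h b) 1.
Proof. unfold mv_imp. rewrite Ho, Hn. reflexivity. Qed.
Lemma hmono a b : a ≤ b -> h a <= h b.
Proof.
  intros H. unfold mv_le in H. pose proof (f_equal h H) as E. fold (mv_imp a b) in E.
  rewrite hi, h1 in E. pose proof (Hr a); pose proof (Hr b). revert E; rm.
Qed.
Lemma h_pw_bound z n : h (pw z n) >= 1 - INR n * (1 - h z).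
Proof.
  induction n; simpl pw. rewrite h1; simpl; lra.
  rewrite ht, S_INR. pose proof (Hr z). pose proof (Hr (pw z n)). rm; nra.
Qed.
End Hom.

Section Pav.
Variable A : Pavelka.

Definition cR (r : R) : A := pv_cst (epsilon (inhabits q01_zero) (fun c => q01val c = r)).

Lemma cst_ext (c c' : Q01) : q01val c = q01val c' -> pv_cst c = @pv_cst A c'.
Proof.
  intros H. rewrite <- (o0 (pv_cst c)).
  rewrite <- (pv_cst_zero A q01_zero q01_zero_val).
  apply pv_cst_add. rewrite q01_zero_val. pose proof (q01_range c). rm.
Qed.
Lemma cR_spec r : isQ r -> 0 <= r <= 1 -> exists c, cR r = pv_cst c /\ q01val c = r.
Proof.
  intros H1 H2. destruct (ex_q01 r H1 H2) as [c Hc].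
  eexists. split. reflexivity. apply epsilon_spec. exists c; auto.
Qed.
Lemma cR_q (c : Q01) : cR (q01val c) = pv_cst c.
Proof.
  destruct (cR_spec (q01val c) (isQ_q01 c) (q01_range c)) as [c' [E H]].
  rewrite E. apply cst_ext; auto.
Qed.
Lemma cR0 : cR 0 = mv_zero.
Proof.
  destruct (cR_spec 0 isQ_0 ltac:(lra)) as [c [E H]]. rewrite E. apply pv_cst_zero; auto.
Qed.
Lemma cR_neg r : isQ r -> 0 <= r <= 1 -> ¬ (cR r) = cR (1 - r).
Proof.
  intros H1 H2. destruct (cR_spec r H1 H2) as [c [E H]].
  destruct (cR_spec (1 - r) (isQ_minus _ _ isQ_1 H1) ltac:(lra)) as [c' [E' H']].
  rewrite E, E'. apply pv_cst_neg. lra.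
Qed.
Lemma cR1 : cR 1 = mv_one.
Proof. unfold mv_one. rewrite <- cR0, cR_neg; [f_equal; lra| apply isQ_0| lra]. Qed.
Lemma cR_add r s : isQ r -> 0 <= r <= 1 -> isQ s -> 0 <= s <= 1 ->
  cR r ⊕ cR s = cR (Rmin (r + s) 1).
Proof.
  intros H1 H2 H3 H4. destruct (cR_spec r H1 H2) as [c [E H]].
  destruct (cR_spec s H3 H4) as [c1 [E1 G1]].
  destruct (cR_spec (Rmin (r + s) 1) (isQ_min _ _ (isQ_plus _ _ H1 H3) isQ_1) ltac:(rm)) as [c2 [E2 G2]].
  rewrite E, E1, E2. apply pv_cst_add. rewrite H, G1, G2. reflexivity.
Qed.
Lemma cR_imp r s : isQ r -> 0 <= r <= 1 -> isQ s -> 0 <= s <= 1 ->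
  cR r ⇒ cR s = cR (Rmin (1 - r + s) 1).
Proof.
  intros. unfold mv_imp. rewrite cR_neg by auto.
  rewrite cR_add; [reflexivity | apply isQ_minus;[apply isQ_1|auto] | lra | auto | auto].
Qed.
Lemma cR_times r s : isQ r -> 0 <= r <= 1 -> isQ s -> 0 <= s <= 1 ->
  cR r ⊙ cR s = cR (Rmax 0 (r + s - 1)).
Proof.
  intros. unfold mv_times. rewrite (cR_neg r), (cR_neg s) by auto.
  assert (Q1 : isQ (1 - r)) by (apply isQ_minus; auto; apply isQ_1).
  assert (Q2 : isQ (1 - s)) by (apply isQ_minus; auto; apply isQ_1).
  rewrite cR_add by (auto; lra).
  rewrite cR_neg. f_equal. rm.
  apply isQ_min. apply isQ_plus; auto. apply isQ_1.
  rm.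
Qed.
End Pav.
Arguments cR {A}.

Lemma imp_trans {A : MVAlgebra} (a b c : A) : (a ⇒ b) ⊙ (b ⇒ c) ≤ (a ⇒ c).
Proof.
  apply resid2. rewrite <- tA, (tC (b ⇒ c) a), tA, tC.
  apply le_trans with ((b ⇒ c) ⊙ b). apply t_mono2. apply le_refl. apply mp. apply mp.
Qed.
Lemma imp_contra {A : MVAlgebra} (a b : A) : (¬ a ⇒ b) = (¬ b ⇒ a).
Proof. unfold mv_imp; rewrite !nn; apply oC. Qed.

Section QEprops.
Variable A : Pavelka.
Variable F : A -> Prop.
Variable k : A -> R.
Hypothesis Hk : quotient_embedding A F k.

Lemma qe_r a : 0 <= k a <= 1. Proof. apply Hk. Qed.
Lemma qe_o a b : k (a ⊕ b) = Rmin (k a + k b) 1. Proof. apply Hk. Qed.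
Lemma qe_n a : k (¬ a) = 1 - k a. Proof. apply Hk. Qed.
Lemma qe_0 : k mv_zero = 0. Proof. apply (h0 A k qe_r qe_o qe_n). Qed.
Lemma qe_1 : k mv_one = 1. Proof. apply (h1 A k qe_r qe_o qe_n). Qed.
Lemma qe_t a b : k (a ⊙ b) = Rmax 0 (k a + k b - 1). Proof. apply (ht A k qe_r qe_o qe_n). Qed.
Lemma qe_i a b : k (a ⇒ b) = Rmin (1 - k a + k b) 1. Proof. apply (hi A k qe_o qe_n). Qed.
Lemma qe_mono a b : a ≤ b -> k a <= k b. Proof. apply (hmono A k qe_r qe_o qe_n). Qed.
Lemma qe_pw z n : k (pw z n) >= 1 - INR n * (1 - k z). Proof. apply (h_pw_bound A k qe_r qe_o qe_n). Qed.
Lemma qe_cR r : isQ r -> 0 <= r <= 1 -> k (cR r) = r.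
Proof. intros H1 H2. destruct (cR_spec A r H1 H2) as [c [E H]]. rewrite E, <- H. apply Hk. Qed.
Lemma qe_mem z : k z = 1 <-> F z.
Proof.
  destruct Hk as [_ [_ [_ [_ Hker]]]].
  rewrite <- qe_1. rewrite Hker. rewrite imp_1r, imp_1l, t1l. reflexivity.
Qed.
Lemma qe_le_iff a b : k a <= k b <-> F (a ⇒ b).
Proof. rewrite <- qe_mem, qe_i. pose proof (qe_r a); pose proof (qe_r b). split; rm. Qed.
Lemma qe_q_iff r x : isQ r -> 0 <= r <= 1 -> (r <= k x <-> F (cR r ⇒ x)).
Proof. intros. rewrite <- qe_le_iff, qe_cR; auto. reflexivity. Qed.
End QEprops.

Lemma qe_unique A F k1 k2 : quotient_embedding A F k1 -> quotient_embedding A F k2 -> forall x, k1 x = k2 x.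
Proof.
  intros H1 H2 x.
  assert (G : forall k k', quotient_embedding A F k -> quotient_embedding A F k' -> ~ k x < k' x).
  { intros k k' Hk Hk' Hlt. pose proof (qe_r A F k Hk x); pose proof (qe_r A F k' Hk' x).
    destruct (Q_dense01 (k x) (k' x)) as [q [Hq [Hq1 Hq2]]]; try lra.
    assert (q <= k' x) by lra. apply (qe_q_iff A F k' Hk' q x Hq Hq1) in H3.
    apply (qe_q_iff A F k Hk q x Hq Hq1) in H3. lra. }
  destruct (Rtotal_order (k1 x) (k2 x)) as [H|[H|H]]; auto.
  exfalso; apply (G k1 k2); auto. exfalso; apply (G k2 k1); auto.
Qed.

Section QEexist.
Variable A : Pavelka.
Variable F : A -> Prop.
Hypothesis HM : is_maximal_filter F.

Let HF : is_filter F. Proof. apply HM. Qed.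
Let Hp : ~ F mv_zero. Proof. apply proper_0. apply HM. Qed.

Lemma isQ_one_minus r : isQ r -> isQ (1 - r). Proof. intros; apply isQ_minus; auto; apply isQ_1. Qed.

Lemma pw_cR r n : isQ r -> 0 <= r <= 1 -> pw (cR r) n = @cR A (Rmax 0 (1 - INR n * (1 - r))).
Proof.
  intros Hq Hr. induction n; simpl pw.
  - simpl. rewrite <- cR1. f_equal. rm.
  - rewrite IHn, cR_times; auto.
    + f_equal. rewrite S_INR. replace ((INR n + 1) * (1 - r)) with (INR n * (1 - r) + (1 - r)) by ring.
      generalize (INR n * (1 - r)); intro m. rm.
    + apply isQ_max. apply isQ_0. apply isQ_minus. apply isQ_1. apply isQ_mult. apply isQ_INR. apply isQ_one_minus; auto.
    + assert (0 <= INR n * (1 - r)) by (apply Rmult_le_pos; [apply pos_INR|lra]). rm.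
Qed.

Lemma cst_mem r : isQ r -> 0 <= r <= 1 -> F (cR r) -> r = 1.
Proof.
  intros Hq Hr HFr. destruct (Req_dec r 1) as [E|E]; auto. exfalso.
  destruct (INR_archimed (1 - r) 1) as [n Hn]. lra.
  apply Hp. apply (f_pw F _ n HF) in HFr. rewrite pw_cR in HFr; auto.
  replace (Rmax 0 (1 - INR n * (1 - r))) with 0 in HFr by rm.
  rewrite cR0 in HFr. exact HFr.
Qed.

Definition Lset (x : A) (t : R) := isQ t /\ 0 <= t <= 1 /\ F (cR t ⇒ x).
Definition hq (x : A) : R := sup01 (Lset x).

Lemma hq_r x : 0 <= hq x <= 1. Proof. apply sup01_range. Qed.
Lemma hE1 q x : isQ q -> 0 <= q <= 1 -> F (cR q ⇒ x) -> q <= hq x.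
Proof. intros; apply sup01_ge; auto. split; auto. Qed.
Lemma hE2 p x : isQ p -> 0 <= p <= 1 -> F (x ⇒ cR p) -> hq x <= p.
Proof.
  intros Hq Hr H. apply sup01_le; auto. intros t [Ht [Ht1 HFt]] _.
  destruct (Rle_lt_dec t p) as [|Hlt]; auto. exfalso.
  assert (HH : F (cR t ⇒ cR p)).
  { apply f_up with ((cR t ⇒ x) ⊙ (x ⇒ cR p)); auto. apply f_mul; auto. apply imp_trans. }
  rewrite cR_imp in HH; auto. apply cst_mem in HH. rm.
  apply isQ_min. apply isQ_plus; auto. apply isQ_one_minus; auto. apply isQ_1.
  rm.
Qed.
Lemma hE3 t x : t < hq x -> exists q, isQ q /\ 0 <= q <= 1 /\ t < q /\ F (cR q ⇒ x).
Proof.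
  intros Ht. pose proof (hq_r x) as Hr0. destruct (Req_dec (hq x) 0) as [E|E].
  - exists 0. repeat split; try lra. apply isQ_0. rewrite cR0, imp_0l. apply f_one; auto.
  - destruct (Q_dense01 t (hq x)) as [q [Hq [Hq1 Hq2]]]; try lra.
    exists q. repeat split; auto; try lra.
    destruct (max_prime F (cR q) x HM) as [H|H]; auto.
    apply hE2 in H; auto. lra.
Qed.
Lemma hE4 t x : hq x < t -> exists p, isQ p /\ 0 <= p <= 1 /\ p < t /\ F (x ⇒ cR p).
Proof.
  intros Ht. pose proof (hq_r x) as Hr0. destruct (Req_dec (hq x) 1) as [E|E].
  - exists 1. repeat split; try lra. apply isQ_1. rewrite cR1, imp_1r. apply f_one; auto.
  - destruct (Q_dense01 (hq x) t) as [q [Hq [Hq1 Hq2]]]; try lra.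
    exists q. repeat split; auto; try lra.
    destruct (max_prime F x (cR q) HM) as [H|H]; auto.
    apply hE1 in H; auto. lra.
Qed.

Lemma hq_n x : hq (¬ x) = 1 - hq x.
Proof.
  pose proof (hq_r x); pose proof (hq_r (¬ x)).
  destruct (Rtotal_order (hq (¬ x)) (1 - hq x)) as [Hl|[E|Hg]]; auto; exfalso.
  - destruct (hE4 (1 - hq x) (¬ x) Hl) as [p [Hq [Hp1 [Hp2 HFp]]]].
    rewrite imp_contra, cR_neg in HFp; auto. apply hE1 in HFp; auto. lra.
    apply isQ_one_minus; auto. lra.
  - destruct (hE3 (1 - hq x) (¬ x) Hg) as [p [Hq [Hp1 [Hp2 HFp]]]].
    rewrite imp_neg, cR_neg in HFp; auto. apply hE2 in HFp; auto. lra.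
    apply isQ_one_minus; auto. lra.
Qed.

Lemma hq_o x y : hq (x ⊕ y) = Rmin (hq x + hq y) 1.
Proof.
  pose proof (hq_r x); pose proof (hq_r y); pose proof (hq_r (x ⊕ y)).
  destruct (Rtotal_order (hq (x ⊕ y)) (Rmin (hq x + hq y) 1)) as [Hl|[E|Hg]]; auto; exfalso.
  - set (d := Rmin (hq x + hq y) 1 - hq (x ⊕ y)).
    destruct (hE3 (hq x - d/2) x) as [q1 [Q1 [R1 [L1 F1]]]]. unfold d; rm.
    destruct (hE3 (hq y - d/2) y) as [q2 [Q2 [R2 [L2 F2]]]]. unfold d; rm.
    assert (HH : F (cR (Rmin (q1 + q2) 1) ⇒ x ⊕ y)).
    { rewrite <- cR_add; auto. apply f_up with ((cR q1 ⇒ x) ⊙ (cR q2 ⇒ y)); auto.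
      apply f_mul; auto. apply imp_o_le. }
    apply hE1 in HH. unfold d in *; rm.
    apply isQ_min. apply isQ_plus; auto. apply isQ_1. rm.
  - set (d := hq (x ⊕ y) - Rmin (hq x + hq y) 1).
    destruct (hE4 (hq x + d/2) x) as [q1 [Q1 [R1 [L1 F1]]]]. unfold d; rm.
    destruct (hE4 (hq y + d/2) y) as [q2 [Q2 [R2 [L2 F2]]]]. unfold d; rm.
    assert (HH : F (x ⊕ y ⇒ cR (Rmin (q1 + q2) 1))).
    { rewrite <- cR_add; auto. apply f_up with ((x ⇒ cR q1) ⊙ (y ⇒ cR q2)); auto.
      apply f_mul; auto. apply imp_o_le. }
    apply hE2 in HH. unfold d in *; rm.
    apply isQ_min. apply isQ_plus; auto. apply isQ_1. rm.
Qed.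

Lemma hq_c (c : Q01) : hq (pv_cst c) = q01val c.
Proof.
  pose proof (q01_range c). rewrite <- cR_q. apply Rle_antisym.
  - apply hE2; auto. apply isQ_q01. rewrite cR_q. unfold mv_imp. rewrite onl. apply f_one; auto.
  - apply hE1; auto. apply isQ_q01. rewrite cR_q. unfold mv_imp. rewrite onl. apply f_one; auto.
Qed.

Lemma hq_mem z : hq z = 1 <-> F z.
Proof.
  split.
  - intros Hz. apply NNPP; intros Hn. destruct (max_L1 F z HM Hn) as [n Hn'].
    assert (E : hq (¬ pw z n) = 1).
    { apply Rle_antisym. apply hq_r. apply hE1. apply isQ_1. lra. rewrite cR1, imp_1l; auto. }
    rewrite hq_n in E. pose proof (h_pw_bound A hq hq_r hq_o hq_n z n). rewrite Hz in H. lra.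
  - intros Hz. apply Rle_antisym. apply hq_r. apply hE1. apply isQ_1. lra. rewrite cR1, imp_1l; auto.
Qed.

Lemma qe_exists : exists h, quotient_embedding A F h.
Proof.
  exists hq. split; [apply hq_r|split; [apply hq_o|split; [apply hq_n|split; [apply hq_c|]]]].
  intros a b. rewrite <- hq_mem.
  pose proof (hq_r a); pose proof (hq_r b).
  rewrite (ht A hq hq_r hq_o hq_n), !(hi A hq hq_o hq_n).
  split; intros; rm.
Qed.
End QEexist.

Lemma qval_qe (A : Pavelka) (F : SpecM A) : quotient_embedding A (proj1_sig F) (qval F).
Proof.
  destruct (qe_exists A (proj1_sig F) (proj2_sig F)) as [h Hh].
  assert (E : forall x, qval F x = h x).
  { intros x. unfold qval.
    destruct (epsilon_spec (inhabits 0) (fun r => exists h, quotient_embedding A (proj1_sig F) h /\ h x = r))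
      as [h' [Hh' E]].
    exists (h x), h; auto.
    rewrite <- E. apply (qe_unique A (proj1_sig F)); auto. }
  assert (E' : qval F = h) by (apply functional_extensionality; exact E).
  rewrite E'; exact Hh.
Qed.

Lemma t_n {A : MVAlgebra} (x : A) : x ⊙ ¬ x = mv_zero.
Proof. unfold mv_times. rewrite nn, onl. apply n1. Qed.

Section MVHom.
Variables A B : MVAlgebra.
Variable p : A -> B.
Hypothesis Hp : mv_hom A B p.
Lemma ph_o a b : p (a ⊕ b) = p a ⊕ p b. Proof. apply Hp. Qed.
Lemma ph_n a : p (¬ a) = ¬ p a. Proof. apply Hp. Qed.
Lemma ph_0 : p mv_zero = mv_zero. Proof. apply Hp. Qed.
Lemma ph_1 : p mv_one = mv_one. Proof. unfold mv_one; rewrite ph_n, ph_0; reflexivity. Qed.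
Lemma ph_t a b : p (a ⊙ b) = p a ⊙ p b. Proof. unfold mv_times; rewrite ph_n, ph_o, !ph_n; reflexivity. Qed.
Lemma ph_j a b : p (mv_join a b) = mv_join (p a) (p b). Proof. unfold mv_join; rewrite ph_o, ph_n, ph_o, ph_n; reflexivity. Qed.
Lemma ph_le a b : a ≤ b -> p a ≤ p b.
Proof. unfold mv_le; intros H. rewrite <- ph_n, <- ph_o, H; apply ph_1. Qed.
End MVHom.

Lemma ss_le (A : Pavelka) : pv_semisimple A -> forall x y : A,
  (forall F : SpecM A, qval F x <= qval F y) -> x ≤ y.
Proof.
  intros [K [B [e [Hs [Hh [Hinj Hon]]]]]] x y Hxy.
  apply Hinj. apply functional_extensionality_dep. intros k.
  set (p := fun a : A => e a k) in *.
  change (p (x ⇒ y) = p mv_one). rewrite (ph_1 _ _ p (Hh k)).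
  set (Fk := fun a : A => p a = mv_one).
  assert (HFk : is_filter Fk).
  { split; [|split].
    - exists mv_one. apply (ph_1 _ _ p (Hh k)).
    - intros a b Ha Hab. apply one_le. unfold Fk in Ha. rewrite <- Ha. apply (ph_le _ _ p (Hh k)); auto.
    - intros a b Ha Hb. unfold Fk in *. rewrite (ph_t _ _ p (Hh k)), Ha, Hb. apply t1. }
  assert (HM : is_maximal_filter Fk).
  { split.
    - split; auto. exists mv_zero. unfold Fk. rewrite (ph_0 _ _ p (Hh k)). destruct (Hs k) as [Hne _]; auto.
    - intros G HG HFG z Gz.
      set (I := fun b => exists a, G a /\ p a = b).
      assert (HI : is_filter I).
      { destruct HG as [HGf _]. split; [|split].
        - exists (p mv_one), mv_one. split; auto. apply f_one; auto.
        - intros b c [a [Ga Ea]] Hbc. destruct (Hon k c) as [a' Ea'].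
          exists (mv_join a a'). split. apply f_up with a; auto. apply le_jl.
          rewrite (ph_j _ _ p (Hh k)). change (e a' k = c) with (p a' = c) in Ea'. rewrite Ea', Ea.
          apply le_antisym. apply j_lub; auto. apply le_refl. apply le_jr.
        - intros b c [a [Ga Ea]] [a' [Ga' Ea']]. exists (a ⊙ a'). split. apply f_mul; auto.
          rewrite (ph_t _ _ p (Hh k)), Ea, Ea'; reflexivity. }
      destruct (Hs k) as [_ Hsim]. destruct (Hsim I HI) as [H1|H2].
      + apply H1. exists z; auto.
      + exfalso. destruct (H2 mv_zero) as [a [Ga Ea]].
        assert (Fk (¬ a)) by (unfold Fk; rewrite (ph_n _ _ p (Hh k)), Ea; reflexivity).
        apply (proper_0 G HG). rewrite <- (t_n a). destruct HG as [HGf _]. apply f_mul; auto. }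
  set (FF := exist _ Fk HM : SpecM A).
  pose proof (qval_qe A FF) as Hq. specialize (Hxy FF).
  apply (qe_le_iff A _ _ Hq) in Hxy. exact Hxy.
Qed.

Lemma Rtimes_Rimp a b c : 0 <= a <= 1 -> 0 <= b <= 1 -> 0 <= c <= 1 ->
  (Rtimes a b <= c <-> b <= Rimp a c).
Proof. intros; unfold Rtimes, Rimp; split; rm. Qed.
Lemma Rimp_range a b : 0 <= a <= 1 -> 0 <= b <= 1 -> 0 <= Rimp a b <= 1.
Proof. intros; unfold Rimp; rm. Qed.
Lemma Rtimes_range a b : 0 <= a <= 1 -> 0 <= b <= 1 -> 0 <= Rtimes a b <= 1.
Proof. intros; unfold Rtimes; rm. Qed.

Section PartI.
Variables I J : Type.
Variable Rel : I -> J -> U01.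

Lemma pow_le (K : Type) (x y : PowerPav K) :
  x ≤ y <-> forall i, proj1_sig (x i) <= proj1_sig (y i).
Proof.
  unfold mv_le, mv_one. simpl. split.
  - intros H i. apply (f_equal (fun f => proj1_sig (f i))) in H. unfold p_oplus, p_neg, p_zero in H; simpl in H.
    pose proof (proj2_sig (x i)); pose proof (proj2_sig (y i)). simpl in *. revert H; rm.
  - intros H. apply functional_extensionality; intro i. apply U01_eq. unfold p_oplus, p_neg, p_zero; simpl.
    specialize (H i). rm.
Qed.

Let rg (u : U01) : 0 <= proj1_sig u <= 1 := proj2_sig u.

Lemma fR_mono (x y : PowerPav I) : x ≤ y -> fR01 Rel x ≤ fR01 Rel y.
Proof.
  rewrite !pow_le. intros H j. simpl. unfold fR. apply inf01_ge. apply inf01_range.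
  intros z [i ->] _. apply Rle_trans with (Rimp (proj1_sig (Rel i j)) (proj1_sig (x i))).
  apply inf01_le. exists i; auto. apply Rimp_range; apply rg.
  specialize (H i). unfold Rimp; rm.
Qed.
Lemma gR_mono (x y : PowerPav J) : x ≤ y -> gR01 Rel x ≤ gR01 Rel y.
Proof.
  rewrite !pow_le. intros H i. simpl. unfold gR. apply sup01_le. apply sup01_range.
  intros z [j ->] _. apply Rle_trans with (Rtimes (proj1_sig (Rel i j)) (proj1_sig (y j))).
  specialize (H j). unfold Rtimes; rm.
  apply sup01_ge. exists j; auto. apply Rtimes_range; apply rg.
Qed.
Lemma adjI (y : PowerPav I) (x : PowerPav J) : x ≤ fR01 Rel y <-> gR01 Rel x ≤ y.
Proof.
  rewrite !pow_le. simpl. unfold fR, gR. split.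
  - intros H i. apply sup01_le. apply rg. intros z [j ->] _.
    apply Rtimes_Rimp; try apply rg. eapply Rle_trans. apply H. apply inf01_le. exists i; auto.
    apply Rimp_range; apply rg.
  - intros H j. apply inf01_ge. apply rg. intros z [i ->] _.
    apply Rtimes_Rimp; try apply rg. eapply Rle_trans. 2: apply H. apply sup01_ge. exists j; auto.
    apply Rtimes_range; apply rg.
Qed.
Lemma cstI (x : PowerPav I) (r : Q01) :
  mv_imp (pv_cst r) (fR01 Rel x) = fR01 Rel (mv_imp (pv_cst r) x).
Proof.
  apply functional_extensionality; intro j. apply U01_eq. simpl.
  unfold mv_imp; simpl. unfold p_oplus, p_neg, p_cst, fR; simpl.
  pose proof (q01_range r) as Hr. set (rr := q01val r) in *.
  set (P := fun z => exists i, z = Rimp (proj1_sig (Rel i j)) (proj1_sig (x i))).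
  symmetry. apply inf01_unique. split; [|split].
  - pose proof (inf01_range P). rm.
  - intros z [i ->] _. assert (inf01 P <= Rimp (proj1_sig (Rel i j)) (proj1_sig (x i))).
    { apply inf01_le. exists i; auto. apply Rimp_range; apply rg. }
    pose proof (rg (Rel i j)); pose proof (rg (x i)). pose proof (inf01_range P). revert H; unfold Rimp; rm.
  - intros s Hs Hlb. pose proof (inf01_range P).
    destruct (Rle_lt_dec s (1 - rr)) as [Hle|Hlt]. rm.
    assert (s - (1 - rr) <= inf01 P).
    { apply inf01_ge. lra. intros z [i ->] _. specialize (Hlb _ (ex_intro _ i eq_refl)).
      pose proof (rg (Rel i j)); pose proof (rg (x i)).
      assert (HR : 0 <= Rimp (proj1_sig (Rel i j)) (Rmin (1 - rr + proj1_sig (x i)) 1) <= 1) by (apply Rimp_range; rm).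
      specialize (Hlb HR). revert Hlb; unfold Rimp; rm. }
    rm.
Qed.
End PartI.

Lemma partI (I J : Type) (Rel : I -> J -> U01) :
  strong_adj (PowerPav I) (PowerPav J) (fR01 Rel) (gR01 Rel).
Proof.
  split; [|split; [|split]].
  - apply fR_mono.
  - apply gR_mono.
  - apply adjI.
  - intros; apply cstI.
Qed.

Section PartII.
Variables A B : Pavelka.
Variable f : A -> B.
Variable g : B -> A.
Hypothesis HsA : pv_semisimple A.
Hypothesis HsB : pv_semisimple B.
Hypothesis Hadj : strong_adj A B f g.

Lemma f_mono a b : a ≤ b -> f a ≤ f b. Proof. apply Hadj. Qed.
Lemma g_mono a b : a ≤ b -> g a ≤ g b. Proof. apply Hadj. Qed.
Lemma adj (a : A) (b : B) : b ≤ f a <-> g b ≤ a. Proof. apply Hadj. Qed.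
Lemma unit (b : B) : b ≤ f (g b). Proof. apply adj, le_refl. Qed.
Lemma counit (a : A) : g (f a) ≤ a. Proof. apply adj, le_refl. Qed.
Lemma f1 : f mv_one = mv_one. Proof. apply one_le. apply adj. apply le_one. Qed.
Lemma f_cR r a : isQ r -> 0 <= r <= 1 -> f (cR r ⇒ a) = cR r ⇒ f a.
Proof.
  intros H1 H2. destruct (cR_spec A r H1 H2) as [c [E V]]. destruct (cR_spec B r H1 H2) as [c' [E' V']].
  rewrite E, E'. assert (pv_cst c = @pv_cst B c') by (apply cst_ext; congruence).
  rewrite <- H. symmetry. apply Hadj.
Qed.
Lemma g_cR_le r b : isQ r -> 0 <= r <= 1 -> g (cR r ⊙ b) ≤ cR r ⊙ g b.
Proof.
  intros. apply adj. rewrite tC. apply resid1. rewrite <- f_cR by auto. apply adj.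
  apply resid2. rewrite tC. apply le_refl.
Qed.
Lemma g_o_le r b : isQ r -> 0 <= r <= 1 -> g (cR r ⊕ b) ≤ (¬ cR r ⇒ g b).
Proof.
  intros. apply adj. rewrite cR_neg, f_cR; auto; try lra. rewrite <- cR_neg by auto.
  rewrite o_imp. apply imp_mono. apply le_refl. apply unit.
  apply isQ_one_minus; auto.
Qed.
Lemma f_meet a b : mv_meet (f a) (f b) ≤ f (mv_meet a b).
Proof.
  apply adj. apply m_glb.
  - apply le_trans with (g (f a)). apply g_mono, m_lb_l. apply counit.
  - apply le_trans with (g (f b)). apply g_mono, m_lb_r. apply counit.
Qed.
Lemma g_join a b : g (mv_join a b) ≤ mv_join (g a) (g b).
Proof.
  apply adj. apply j_lub.
  - apply le_trans with (f (g a)). apply unit. apply f_mono, le_jl.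
  - apply le_trans with (f (g b)). apply unit. apply f_mono, le_jr.
Qed.
Lemma g0 : g mv_zero ≤ mv_zero. Proof. apply adj. apply le_zero. Qed.

Definition Rval (F : SpecM A) (G : SpecM B) : R :=
  inf01 (fun z => exists a : A, z = Rimp (qval G (f a)) (qval F a)).

Lemma qr {C : Pavelka} (F : SpecM C) a : 0 <= qval F a <= 1. Proof. apply (qe_r _ _ _ (qval_qe C F)). Qed.

Lemma Rval_le F G a : Rval F G <= Rimp (qval G (f a)) (qval F a).
Proof. apply inf01_le. exists a; auto. apply Rimp_range; apply qr. Qed.
Lemma Rval_ge F G rho : 0 <= rho <= 1 -> (forall a, rho + qval G (f a) - 1 <= qval F a) -> rho <= Rval F G.
Proof.
  intros Hr H. apply inf01_ge; auto. intros z [a ->] _. specialize (H a).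
  pose proof (qr G (f a)); pose proof (qr F a). unfold Rimp; rm.
Qed.

Lemma e_facts (n : nat) : 0 < / INR (S n) <= 1 /\ isQ (/ INR (S n)).
Proof.
  assert (1 <= INR (S n)) by (rewrite S_INR; pose proof (pos_INR n); lra).
  split. split. apply Rinv_0_lt_compat; lra.
  rewrite <- Rinv_1. apply Rinv_le_contravar; lra.
  apply isQ_inv. apply isQ_INR. lra.
Qed.
Lemma pw_zero_bound {C : Pavelka} (F : SpecM C) (w : C) m :
  pw w m ≤ mv_zero -> qval F w <= 1 - / INR (S m).
Proof.
  intros H. assert (H' : pw w (S m) ≤ mv_zero) by (eapply le_trans; [apply pw_S_le|exact H]).
  pose proof (qval_qe C F) as Hq.
  pose proof (qe_mono _ _ _ Hq _ _ H') as H1. rewrite (qe_0 _ _ _ Hq) in H1.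
  pose proof (qe_pw _ _ _ Hq w (S m)).
  assert (1 <= INR (S m)) by (rewrite S_INR; pose proof (pos_INR m); lra).
  apply Rmult_le_reg_l with (INR (S m)). lra.
  rewrite Rmult_minus_distr_l, Rinv_r by lra. lra.
Qed.

Ltac qeq C F := pose proof (qval_qe C F).

Theorem partII_f (x : A) (G : SpecM B) :
  qval G (f x) = inf01 (fun z => exists F : SpecM A, z = Rimp (Rval F G) (qval F x)).
Proof.
  set (c := qval G (f x)). pose proof (qval_qe B G) as HG.
  symmetry; apply inf01_unique. split; [apply qr|split].
  - intros z [F ->] _. pose proof (Rval_le F G x). fold c in H.
    pose proof (qr F x). pose proof (qr G (f x)). fold c in H1.
    pose proof (inf01_range (fun z => exists a : A, z = Rimp (qval G (f a)) (qval F a))). fold (Rval F G) in H2.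
    revert H; unfold Rimp; rm.
  - intros s' Hs' Hlb. apply Rnot_lt_le; intros Hlt.
    pose proof (qr G (f x)) as Hc0. fold c in Hc0.
    destruct (Q_dense01 c s') as [s [Qs [Rs [Ls1 Ls2]]]]; try lra.
    set (cs := @cR A s). set (yv := cs ⇒ x).
    set (T := fun z => exists m h, qval G (f h) = 1 /\ pw ((x ⇒ cs) ⊙ (yv ⇒ h)) m ≤ z).
    assert (HT : is_filter T).
    { split; [|split].
      - exists mv_one, O, mv_one. split. rewrite f1. apply (qe_1 _ _ _ HG). apply le_one.
      - intros a b [m [h [H1 H2]]] Hab. exists m, h. split; auto. eapply le_trans; eauto.
      - intros a b [m1 [h1 [H1 H2]]] [m2 [h2 [H3 H4]]]. exists (m1 + m2)%nat, (mv_meet h1 h2). split.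
        + apply Rle_antisym. apply qr.
          apply Rle_trans with (qval G (f h1 ⊙ f h2)).
          rewrite (qe_t _ _ _ HG), H1, H3. rm.
          apply (qe_mono _ _ _ HG). eapply le_trans. 2: apply f_meet. apply m_glb. apply t_le_l. apply t_le_r.
        + rewrite pw_add. apply t_mono2.
          * eapply le_trans. 2: exact H2. apply pw_mono. apply t_mono2. apply le_refl. apply imp_mono. apply le_refl. apply m_lb_l.
          * eapply le_trans. 2: exact H4. apply pw_mono. apply t_mono2. apply le_refl. apply imp_mono. apply le_refl. apply m_lb_r. }
    assert (HT0 : ~ T mv_zero).
    { intros [m [h [Hh Hpw]]].
      destruct (e_facts m) as [He Qe]. set (e := / INR (S m)) in *.
      assert (Hle : cs ⊙ (cR e ⊕ h) ≤ x).
      { apply ss_le; auto. intros F. pose proof (pw_zero_bound F _ m Hpw) as Hb. fold e in Hb.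
        pose proof (qval_qe A F) as HF.
        rewrite (qe_t _ _ _ HF) in Hb. unfold yv in Hb. rewrite !(qe_i _ _ _ HF) in Hb.
        unfold cs in Hb. rewrite (qe_cR _ _ _ HF) in Hb by auto.
        rewrite (qe_t _ _ _ HF), (qe_o _ _ _ HF). unfold cs. rewrite !(qe_cR _ _ _ HF) by (auto; lra).
        pose proof (qr F x); pose proof (qr F h). revert Hb. rm. }
      rewrite tC in Hle. apply resid2 in Hle. rewrite o_imp, cR_neg in Hle by (auto; lra).
      apply f_mono in Hle. unfold yv, cs in *. rewrite !f_cR in Hle; auto; try (apply isQ_one_minus; auto); try lra.
      apply (qe_mono _ _ _ HG) in Hle. rewrite !(qe_i _ _ _ HG), !(qe_cR _ _ _ HG), Hh in Hle; auto; try (apply isQ_one_minus; auto); try lra.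
      fold c in Hle. revert Hle; rm. }
    destruct (zorn_filter _ T) as [F [HM HTF]]; [apply proper_of; auto|].
    set (FF := exist _ F HM : SpecM A). pose proof (qval_qe A FF) as HF.
    assert (M1 : forall h, qval G (f h) = 1 -> F (yv ⇒ h)).
    { intros h Hh. apply HTF. exists (S O), h. split; auto. simpl. rewrite t1. apply t_le_r. }
    assert (HX : qval FF x <= s).
    { assert (F (x ⇒ cs)). apply HTF. exists (S O), mv_one. split. rewrite f1; apply (qe_1 _ _ _ HG).
      simpl. rewrite t1, imp_1r, t1. apply le_refl.
      apply (qe_le_iff _ _ _ HF) in H. unfold cs in H; rewrite (qe_cR _ _ _ HF) in H; auto. }
    set (rho := 1 - s + qval FF x).
    assert (Hrho : rho <= Rval FF G).
    { apply Rval_ge. pose proof (qr FF x); unfold rho; lra.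
      intros a. apply Rnot_lt_le; intros Ha. pose proof (qr FF a). pose proof (qr G (f a)). unfold rho in *.
      destruct (Q_dense01 (qval FF a + s - qval FF x) (qval G (f a))) as [r [Qr [Rr [Lr1 Lr2]]]]; try lra.
      assert (Hh : qval G (f (cR r ⇒ a)) = 1).
      { rewrite f_cR, (qe_i _ _ _ HG), (qe_cR _ _ _ HG) by auto. rm. }
      apply M1 in Hh. apply (qe_le_iff _ _ _ HF) in Hh. unfold yv, cs in Hh.
      rewrite !(qe_i _ _ _ HF), !(qe_cR _ _ _ HF) in Hh by auto. unfold rho in *. revert Hh; rm. }
    assert (HH : s' <= Rimp (Rval FF G) (qval FF x)).
    { apply Hlb. exists FF; auto. apply Rimp_range. apply inf01_range. apply qr. }
    pose proof (inf01_range (fun z => exists a : A, z = Rimp (qval G (f a)) (qval FF a))). fold (Rval FF G) in H.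
    revert HH; unfold Rimp, rho in *; rm.
Qed.

Theorem partII_g (y : B) (F : SpecM A) :
  qval F (g y) = sup01 (fun z => exists G : SpecM B, z = Rtimes (Rval F G) (qval G y)).
Proof.
  set (u := qval F (g y)). pose proof (qval_qe A F) as HF.
  symmetry; apply sup01_unique. split; [apply qr|split].
  - intros z [G ->] _. pose proof (Rval_le F G (g y)) as H1. fold u in H1.
    pose proof (qe_mono _ _ _ (qval_qe B G) _ _ (unit y)) as H2.
    pose proof (qr F (g y)) as H3. fold u in H3. pose proof (qr G y). pose proof (qr G (f (g y))).
    pose proof (inf01_range (fun z => exists a : A, z = Rimp (qval G (f a)) (qval F a))) as H4. fold (Rval F G) in H4.
    revert H1; unfold Rimp, Rtimes; rm.
  - intros s' Hs' Hub. apply Rnot_lt_le; intros Hlt.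
    pose proof (qr F (g y)) as Hu0. fold u in Hu0.
    destruct (Q_dense01 s' u) as [t [Qt [Rt [Lt1 Lt2]]]]; try lra.
    set (ct := @cR B t). set (w := y ⊙ ¬ ct).
    set (T := fun z => exists m d, qval F (g d) = 0 /\ pw ((ct ⇒ y) ⊙ (d ⇒ w)) m ≤ z).
    assert (Hg0 : qval F (g mv_zero) = 0).
    { apply Rle_antisym. rewrite <- (qe_0 _ _ _ HF). apply (qe_mono _ _ _ HF). apply g0. apply qr. }
    assert (HT : is_filter T).
    { split; [|split].
      - exists mv_one, O, mv_zero. split; auto. apply le_one.
      - intros a b [m [d [H1 H2]]] Hab. exists m, d. split; auto. eapply le_trans; eauto.
      - intros a b [m1 [d1 [H1 H2]]] [m2 [d2 [H3 H4]]]. exists (m1 + m2)%nat, (mv_join d1 d2). split.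
        + apply Rle_antisym. 2: apply qr.
          apply Rle_trans with (qval F (g d1 ⊕ g d2)).
          apply (qe_mono _ _ _ HF). eapply le_trans. apply g_join. apply j_le_o.
          rewrite (qe_o _ _ _ HF), H1, H3. rm.
        + rewrite pw_add. apply t_mono2.
          * eapply le_trans. 2: exact H2. apply pw_mono. apply t_mono2. apply le_refl. apply imp_mono. apply le_jl. apply le_refl.
          * eapply le_trans. 2: exact H4. apply pw_mono. apply t_mono2. apply le_refl. apply imp_mono. apply le_jr. apply le_refl. }
    assert (HT0 : ~ T mv_zero).
    { intros [m [d [Hd Hpw]]].
      destruct (e_facts m) as [He Qe]. set (e := / INR (S m)) in *.
      set (t' := Rmax 0 (t - e)).
      assert (Qt' : isQ t') by (apply isQ_max; [apply isQ_0| apply isQ_minus; auto]).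
      assert (Rt' : 0 <= t' <= 1) by (unfold t'; rm).
      assert (Hle : y ≤ cR t' ⊕ d).
      { apply ss_le; auto. intros G. pose proof (pw_zero_bound G _ m Hpw) as Hb. fold e in Hb.
        pose proof (qval_qe B G) as HG.
        rewrite (qe_t _ _ _ HG) in Hb. unfold w in Hb. rewrite !(qe_i _ _ _ HG) in Hb.
        rewrite (qe_t _ _ _ HG), (qe_n _ _ _ HG) in Hb. unfold ct in Hb. rewrite (qe_cR _ _ _ HG) in Hb by auto.
        rewrite (qe_o _ _ _ HG), (qe_cR _ _ _ HG) by auto.
        pose proof (qr G y); pose proof (qr G d). unfold t'. revert Hb. rm. }
      apply g_mono in Hle.
      assert (Hle2 : g y ≤ (¬ cR t' ⇒ g d)) by (eapply le_trans; [exact Hle| apply g_o_le; auto]).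
      clear Hle; rename Hle2 into Hle.
      apply (qe_mono _ _ _ HF) in Hle. rewrite (qe_i _ _ _ HF), (qe_n _ _ _ HF), (qe_cR _ _ _ HF), Hd in Hle by auto.
      fold u in Hle. unfold t' in Hle. revert Hle; rm. }
    destruct (zorn_filter _ T) as [G [HM HTG]]; [apply proper_of; auto|].
    set (GG := exist _ G HM : SpecM B). pose proof (qval_qe B GG) as HG.
    assert (M1 : forall d, qval F (g d) = 0 -> G (d ⇒ w)).
    { intros d Hd. apply HTG. exists (S O), d. split; auto. simpl. rewrite t1. apply t_le_r. }
    assert (HY : t <= qval GG y).
    { assert (G (ct ⇒ y)). apply HTG. exists (S O), mv_zero. split; auto.
      simpl. rewrite t1, imp_0l, t1. apply le_refl.
      apply (qe_le_iff _ _ _ HG) in H. unfold ct in H; rewrite (qe_cR _ _ _ HG) in H; auto. }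
    pose proof (qr GG y) as HY1.
    set (rho := 1 - qval GG y + t).
    assert (Hrho : rho <= Rval F GG).
    { apply Rval_ge. unfold rho; lra.
      intros a. apply Rnot_lt_le; intros Ha. pose proof (qr F a). pose proof (qr GG (f a)). unfold rho in *.
      destruct (Q_dense01 (qval F a) (qval GG (f a) - qval GG y + t)) as [p [Qp [Rp [Lp1 Lp2]]]]; try lra.
      assert (Hd : qval F (g (cR (1 - p) ⊙ f a)) = 0).
      { apply Rle_antisym. 2: apply qr.
        eapply Rle_trans. apply (qe_mono _ _ _ HF). apply g_cR_le. apply isQ_one_minus; auto. lra.
        rewrite (qe_t _ _ _ HF), (qe_cR _ _ _ HF). 2: apply isQ_one_minus; auto. 2: lra.
        pose proof (qe_mono _ _ _ HF _ _ (counit a)). pose proof (qr F (g (f a))). rm. }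
      apply M1 in Hd. apply (qe_le_iff _ _ _ HG) in Hd. unfold w, ct in Hd.
      rewrite (qe_t _ _ _ HG), (qe_t _ _ _ HG), (qe_n _ _ _ HG), !(qe_cR _ _ _ HG) in Hd; auto.
      revert Hd; rm. apply isQ_one_minus; auto. lra. }
    assert (HH : Rtimes (Rval F GG) (qval GG y) <= s').
    { apply Hub. exists GG; auto. apply Rtimes_range. apply inf01_range. apply qr. }
    pose proof (inf01_range (fun z => exists a : A, z = Rimp (qval GG (f a)) (qval F a))). fold (Rval F GG) in H.
    revert HH; unfold Rtimes, rho in *; rm.
Qed.

End PartII.

Theorem theorem6 :
  (forall (I J : Type) (Rel : I -> J -> U01),
      strong_adj (PowerPav I) (PowerPav J) (fR01 Rel) (gR01 Rel)) /\
  (forall (A B : Pavelka) (f : A -> B) (g : B -> A),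
      pv_semisimple A -> pv_semisimple B -> strong_adj A B f g ->
      exists Rel : SpecM A -> SpecM B -> U01,
        (forall (F : SpecM A) (G : SpecM B),
            proj1_sig (Rel F G) =
            inf01 (fun z => exists a : A, z = Rimp (qval G (f a)) (qval F a))) /\
        (forall x : A, nmap B (f x) = fR Rel (nmap A x)) /\
        (forall y : B, nmap A (g y) = gR Rel (nmap B y))).
Proof.
  split. intros; apply partI.
  intros A B f g HsA HsB Hadj.
  exists (fun F G => exist _ (Rval A B f F G) (inf01_range _)).
  split; [|split].
  - intros F G. reflexivity.
  - intros x. apply functional_extensionality; intro G. unfold nmap, fR. simpl.
    eapply partII_f; eauto.
  - intros y. apply functional_extensionality; intro F. unfold nmap, gR. simpl.
    eapply partII_g; eauto.
Qed.
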